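(* Let $G$ be a grid-labelled graph of type $(3,3)$ with exactly $4$ edges, all diagonal. Then $G$ satisfies the degree criterion if and only if either $G$ is locally isomorphic to the cross-hatch $B_4$, or $E(G)$ is the disjoint union of two criss-crosses, i.e. of two edge sets of the form $\{\{(i,j),(k,l)\},\{(i,l),(k,j)\}\}$ with $i\neq k$, $j\neq l$.
   Context: A grid-labelled graph of type $(a,b)$ is a simple graph whose vertex set is the grid $[a]\times[b]$. An edge $\{(i,j),(k,l)\}$ is diagonal if $i\neq k$ and $j\neq l$. The partial transpose $\Gamma(G)$ is the grid-labelled graph with edge set $\{\{(k,j),(i,l)\}:\{(i,j),(k,l)\}\in E(G)\}$; $G$ satisfies the degree criterion if every vertex has the same degree in $G$ and in $\Gamma(G)$. Two grid-labelled graphs $G,H$ of type $(a,b)$ are locally isomorphic if there are permutations $\pi$ of $[a]$ and $\sigma$ of $[b]$ with $\{(i,j),(k,l)\}\in E(G)\iff\{(\pi(i),\sigma(j)),(\pi(k),\sigma(l))\}\in E(H)$. The cross-hatch $B_4$ is the type $(3,3)$ graph with edges $\{(1,1),(2,3)\},\{(2,1),(3,3)\},\{(1,2),(3,1)\},\{(1,3),(3,2)\}$. *)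

(* Defs.v *)
From mathcomp Require Import all_boot all_fingroup.
Set Implicit Arguments. Unset Strict Implicit. Unset Printing Implicit Defensive.

(* Vertices of the (3,3) grid [3]x[3]; index t in [3] is represented by t-1 : 'I_3. *)
Definition V3 : finType := ('I_3 * 'I_3)%type.

Definition grid_graph (E : {set {set V3}}) : Prop :=
  forall e, e \in E -> #|e| = 2.

Definition diagonal (e : {set V3}) : Prop :=
  exists i j k l : 'I_3, [/\ i != k, j != l & e = [set (i, j); (k, l)]].

Definition ptrans (E : {set {set V3}}) : {set {set V3}} :=
  [set [set (x.2.1, x.1.2); (x.1.1, x.2.2)]
     | x in [set x : V3 * V3 | [set x.1; x.2] \in E]].

Definition degree (E : {set {set V3}}) (v : V3) : nat :=
  #|[set e in E | v \in e]|.

Definition degree_criterion (E : {set {set V3}}) : Prop :=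
  forall v : V3, degree E v = degree (ptrans E) v.

Definition locally_isomorphic (E H : {set {set V3}}) : Prop :=
  exists (pi sigma : {perm 'I_3}),
    forall i j k l : 'I_3,
      ([set (i, j); (k, l)] \in E) =
      ([set (pi i, sigma j); (pi k, sigma l)] \in H).

Definition gv (i j : nat) : V3 := (inord i.-1, inord j.-1).

(* The cross-hatch B_4 (1-indexed coordinates as in the paper). *)
Definition B4 : {set {set V3}} :=
  [set [set gv 1 1; gv 2 3]; [set gv 2 1; gv 3 3];
       [set gv 1 2; gv 3 1]; [set gv 1 3; gv 3 2]].

Definition criss_cross (C : {set {set V3}}) : Prop :=
  exists i j k l : 'I_3, [/\ i != k, j != l &
    C = [set [set (i, j); (k, l)]; [set (i, l); (k, j)]]].

(* Main.v *)
Require Import Defs.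
From mathcomp Require Import all_boot all_fingroup.
Set Implicit Arguments. Unset Strict Implicit. Unset Printing Implicit Defensive.

Definition LQ : seq ((nat * nat) * (nat * nat)) :=
  [:: ((0,0),(1,1)); ((0,0),(1,2)); ((0,1),(1,0)); ((0,1),(1,2)); ((0,2),(1,0)); ((0,2),(1,1));
      ((0,0),(2,1)); ((0,0),(2,2)); ((0,1),(2,0)); ((0,1),(2,2)); ((0,2),(2,0)); ((0,2),(2,1));
      ((1,0),(2,1)); ((1,0),(2,2)); ((1,1),(2,0)); ((1,1),(2,2)); ((1,2),(2,0)); ((1,2),(2,1))].
Definition p1 (n : nat) : nat * nat := (nth ((0,0),(1,1)) LQ n).1.
Definition p2 (n : nat) : nat * nat := (nth ((0,0),(1,1)) LQ n).2.
Definition nidx (a b : nat * nat) : nat :=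
  let i := index (a, b) LQ in if i < 18 then i else index (b, a) LQ.
Definition t1 n := ((p2 n).1, (p1 n).2).
Definition t2 n := ((p1 n).1, (p2 n).2).
Definition trn (n : nat) : nat := nidx (t1 n) (t2 n).
Definition Pf (P S : seq nat) (x : nat * nat) := (nth 0 P x.1, nth 0 S x.2).
Definition img P S n := nidx (Pf P S (p1 n)) (Pf P S (p2 n)).
Definition perms3 : seq (seq nat) :=
  [:: [:: 0;1;2]; [:: 0;2;1]; [:: 1;0;2]; [:: 1;2;0]; [:: 2;0;1]; [:: 2;1;0]].
Definition B4nat : seq nat := [:: 1; 13; 8; 11].
Definition verts : seq (nat * nat) := [seq (i, j) | i <- iota 0 3, j <- iota 0 3].
Definition dcn (s : seq nat) : bool :=
  all (fun v => count (fun n => v \in [:: p1 n; p2 n]) s ==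
                count (fun n => v \in [:: p1 (trn n); p2 (trn n)]) s) verts.
Definition lin (s : seq nat) : bool :=
  has (fun P => has (fun S => all (fun n => img P S n \in B4nat) s && uniq (map (img P S) s))
    perms3) perms3.
Definition ccn (s : seq nat) : bool :=
  has (fun x => has (fun y => (trn x \in s) && (trn y \in s) && uniq [:: x; trn x; y; trn y]) s) s.
Definition allI k (P : nat -> bool) := all P (iota 0 k).
Lemma allIP k P : allI k P -> forall i, i < k -> P i.
Proof. by move=> /allP H i Hi; apply: H; rewrite mem_iota. Qed.

Definition bigcheck : bool :=
  allI 18 (fun a => allI 18 (fun b => allI 18 (fun c => allI 18 (fun d =>
    if (a < b) && (b < c) && (c < d) then
      dcn [:: a; b; c; d] == (lin [:: a; b; c; d] || ccn [:: a; b; c; d]) else true)))).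
Lemma bigcheckT : bigcheck. Proof. by vm_compute. Qed.

Definition ok2 (x : nat * nat) := (x.1 < 3) && (x.2 < 3).
Lemma NC_valid : allI 18 (fun n => [&& ok2 (p1 n), ok2 (p2 n), (p1 n).1 != (p2 n).1 &
                                        (p1 n).2 != (p2 n).2]).
Proof. by vm_compute. Qed.
Definition same2 (x y a b : nat * nat) := ((x == a) && (y == b)) || ((x == b) && (y == a)).
Lemma NC_nidx : allI 3 (fun i => allI 3 (fun j => allI 3 (fun k => allI 3 (fun l =>
  (i != k) ==> (j != l) ==> (nidx (i,j) (k,l) < 18) &&
      same2 (p1 (nidx (i,j) (k,l))) (p2 (nidx (i,j) (k,l))) (i,j) (k,l))))).
Proof. by vm_compute. Qed.
Lemma NC_inj : allI 18 (fun n => allI 18 (fun m =>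
  (p1 n \in [:: p1 m; p2 m]) ==> (p2 n \in [:: p1 m; p2 m]) ==> (n == m))).
Proof. by vm_compute. Qed.
Lemma NC_trn : allI 18 (fun n => [&& trn n < 18, trn n != n &
   same2 (p1 (trn n)) (p2 (trn n)) (t1 n) (t2 n)]).
Proof. by vm_compute. Qed.
Lemma NC_perm : allI 3 (fun x => allI 3 (fun y => allI 3 (fun z =>
  (x != y) ==> (x != z) ==> (y != z) ==> ([:: x; y; z] \in perms3)))).
Proof. by vm_compute. Qed.
Lemma NC_img : all (fun P => all (fun S => allI 18 (fun n =>
   (img P S n < 18) && same2 (p1 (img P S n)) (p2 (img P S n)) (Pf P S (p1 n)) (Pf P S (p2 n))))
   perms3) perms3.
Proof. by vm_compute. Qed.
Lemma NC_imginj : all (fun P => all (fun S => allI 18 (fun n => allI 18 (fun m =>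
   (img P S n == img P S m) ==> (n == m)))) perms3) perms3.
Proof. by vm_compute. Qed.
Lemma NC_perms : all (fun P => [&& size P == 3, all (fun x => x < 3) P & uniq P]) perms3.
Proof. by vm_compute. Qed.
Lemma NC_trn2 : allI 18 (fun n => trn (trn n) == n).
Proof. by vm_compute. Qed.
Lemma NC_verts : all ok2 verts.
Proof. by vm_compute. Qed.
Lemma NC_B4 : all (fun n => n < 18) B4nat.
Proof. by vm_compute. Qed.

Definition o (m : nat) : 'I_3 := Ordinal (ltn_pmod m (isT : 0 < 3)).
Definition decv (x : nat * nat) : V3 := (o x.1, o x.2).
Definition cv (v : V3) : nat * nat := (val v.1, val v.2).
Lemma oK (i : 'I_3) : o (val i) = i.
Proof. by apply: val_inj; rewrite /= modn_small. Qed.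
Lemma valo m : m < 3 -> val (o m) = m.
Proof. by move=> h; rewrite /= modn_small. Qed.
Lemma decvK v : decv (cv v) = v.
Proof. by case: v => a b; rewrite /decv /cv /= !oK. Qed.
Lemma cvK x : ok2 x -> cv (decv x) = x.
Proof. by case: x => a b /andP[ha hb]; rewrite /cv /= !modn_small. Qed.
Lemma cv_inj : injective cv. Proof. exact: can_inj decvK. Qed.
Lemma eq_cv v w : (v == w) = (cv v == cv w).
Proof. by rewrite (inj_eq cv_inj). Qed.
Lemma eq_decv v x : ok2 x -> (v == decv x) = (cv v == x).
Proof. by move=> h; rewrite eq_cv cvK. Qed.

Definition edn (n : nat) : {set V3} := [set decv (p1 n); decv (p2 n)].

Lemma valid n : n < 18 -> [/\ ok2 (p1 n), ok2 (p2 n), (p1 n).1 != (p2 n).1 &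
                                        (p1 n).2 != (p2 n).2].
Proof. by move=> h; have /and4P := allIP NC_valid h. Qed.
Lemma p12 n : n < 18 -> p1 n != p2 n.
Proof. by move=> /valid [_ _ h _]; apply: contraNneq h => ->. Qed.

Lemma mem_edn n v : n < 18 -> (v \in edn n) = (cv v \in [:: p1 n; p2 n]).
Proof. by move=> /valid[h1 h2 _ _]; rewrite !inE !eq_decv. Qed.

Lemma edn_inj n m : n < 18 -> m < 18 -> edn n = edn m -> n = m.
Proof.
move=> hn hm e; apply/eqP; have := allIP (allIP NC_inj hn) hm.
have [h1 h2 _ _] := valid hn.
rewrite -(cvK h1) -(cvK h2) -!mem_edn // -e !inE !eqxx /=.
by rewrite orbT; apply.
Qed.

Lemma trn_facts n : n < 18 -> [/\ trn n < 18, trn n != n &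
   same2 (p1 (trn n)) (p2 (trn n)) (t1 n) (t2 n)].
Proof. by move=> h; have /and3P := allIP NC_trn h. Qed.

Lemma pair_cases (X : eqType) (a b P1 P2 : X) :
  a \in [:: P1; P2] -> b \in [:: P1; P2] -> P1 \in [:: a; b] -> P2 \in [:: a; b] ->
  P1 != P2 -> (a = P1 /\ b = P2) \/ (a = P2 /\ b = P1).
Proof.
rewrite !inE => /orP[]/eqP-> /orP[]/eqP->; rewrite ?eqxx ?orbb /= => h3 h4 hne.
- by rewrite (eqP h4) eqxx in hne.
- by left.
- by right.
- by rewrite (eqP h3) eqxx in hne.
Qed.

Definition Tx (x : V3 * V3) : {set V3} := [set (x.2.1, x.1.2); (x.1.1, x.2.2)].

Lemma LT n x1 x2 : n < 18 -> [set x1; x2] = edn n -> Tx (x1, x2) = edn (trn n).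
Proof.
move=> hn H.
have [t18 _ hs] := trn_facts hn.
have [v1 v2 _ _] := valid hn.
have h1 : cv x1 \in [:: p1 n; p2 n] by rewrite -mem_edn // -H set21.
have h2 : cv x2 \in [:: p1 n; p2 n] by rewrite -mem_edn // -H set22.
have h3 : p1 n \in [:: cv x1; cv x2].
  have : decv (p1 n) \in [set x1; x2] by rewrite H set21.
  by rewrite !inE => /orP[]/eqP<-; rewrite cvK // eqxx ?orbT.
have h4 : p2 n \in [:: cv x1; cv x2].
  have : decv (p2 n) \in [set x1; x2] by rewrite H set22.
  by rewrite !inE => /orP[]/eqP<-; rewrite cvK // eqxx ?orbT.
apply/setP => v; rewrite mem_edn // !inE !eq_cv /cv /=.
have e1 : (val x1.1, val x1.2) = cv x1 by [].
have e2 : (val x2.1, val x2.2) = cv x2 by [].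
move: hs; rewrite /same2 /t1 /t2.
case: (pair_cases h1 h2 h3 h4 (p12 hn)) => [[c1 c2]|[c1 c2]].
- have [a1 a2] : val x1.1 = (p1 n).1 /\ val x1.2 = (p1 n).2 by rewrite -c1.
  have [b1 b2] : val x2.1 = (p2 n).1 /\ val x2.2 = (p2 n).2 by rewrite -c2.
  rewrite a1 a2 b1 b2.
  by case/orP=> /andP[/eqP-> /eqP->]; rewrite // orbC.
- have [a1 a2] : val x1.1 = (p2 n).1 /\ val x1.2 = (p2 n).2 by rewrite -c1.
  have [b1 b2] : val x2.1 = (p1 n).1 /\ val x2.2 = (p1 n).2 by rewrite -c2.
  rewrite a1 a2 b1 b2.
  by case/orP=> /andP[/eqP-> /eqP->]; rewrite // orbC.
Qed.

Lemma diag_edn (i j k l : 'I_3) : i != k -> j != l ->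
  exists2 n, n < 18 & [set (i, j); (k, l)] = edn n.
Proof.
move=> hik hjl.
have := allIP (allIP (allIP (allIP NC_nidx (ltn_ord i)) (ltn_ord j)) (ltn_ord k)) (ltn_ord l).
rewrite hik hjl /= => /andP[hn hs]; exists (nidx (val i, val j) (val k, val l)) => //.
rewrite /edn; move: hs; rewrite /same2.
case/orP=> /andP[/eqP-> /eqP->].
- by rewrite -[(i, j)]decvK -[(k, l)]decvK.
- by rewrite setUC -[(i, j)]decvK -[(k, l)]decvK.
Qed.

Lemma card_seqset (T : finType) (l : seq T) : uniq l -> #|[set x | x \in l]| = size l.
Proof. by move=> u; rewrite cardsE; apply/card_uniqP. Qed.

Lemma cardf (T : finType) (l : seq T) (P : pred T) : uniq l ->
  #|[set e in [set x | x \in l] | P e]| = count P l.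
Proof.
move=> u; rewrite -size_filter -card_seqset ?filter_uniq //.
by apply: eq_card => e; rewrite !inE mem_filter andbC.
Qed.

Definition all18 (s : seq nat) := all (fun n => n < 18) s.

Lemma edn_uniq s : uniq s -> all18 s -> uniq (map edn s).
Proof.
move=> u /allP a; rewrite map_inj_in_uniq // => x y hx hy; apply: edn_inj; exact: a.
Qed.

Lemma trn_inj n m : n < 18 -> m < 18 -> trn n = trn m -> n = m.
Proof.
move=> hn hm e; rewrite -(eqP (allIP NC_trn2 hn)) -(eqP (allIP NC_trn2 hm)).
by rewrite e.
Qed.

Lemma ednt_uniq s : uniq s -> all18 s -> uniq (map (fun n => edn (trn n)) s).
Proof.
move=> u /allP a; rewrite map_inj_in_uniq // => x y hx hy e.
have [tx _ _] := trn_facts (a _ hx); have [ty _ _] := trn_facts (a _ hy).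
by apply: trn_inj; [exact: a | exact: a | apply: edn_inj].
Qed.

Lemma degree_count E s v : uniq s -> all18 s -> E = [set x | x \in map edn s] ->
  degree E v = count (fun n => cv v \in [:: p1 n; p2 n]) s.
Proof.
move=> u a ->; rewrite /degree cardf ?edn_uniq // count_map.
apply: eq_in_count => n hn /=; rewrite mem_edn //; exact: (allP a).
Qed.

Lemma ptrans_eq E s : all18 s -> E = [set x | x \in map edn s] ->
  ptrans E = [set x | x \in map (fun n => edn (trn n)) s].
Proof.
move=> /allP a HE; apply/setP => e; rewrite inE /ptrans.
apply/imsetP/mapP.
- case=> x; rewrite inE HE inE => /mapP[n hn exn] ->.
  exists n => //; apply: (LT (a _ hn)); case: x exn => x1 x2 /= ->; done.
- case=> n hn ->.
  exists (decv (p1 n), decv (p2 n)); last by symmetry; exact: (LT (a _ hn) (erefl _)).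
  by rewrite inE HE inE; apply/mapP; exists n.
Qed.

Lemma degree_countT E s v : uniq s -> all18 s -> E = [set x | x \in map edn s] ->
  degree (ptrans E) v = count (fun n => cv v \in [:: p1 (trn n); p2 (trn n)]) s.
Proof.
move=> u a HE; rewrite (ptrans_eq a HE) /degree cardf ?ednt_uniq // count_map.
apply: eq_in_count => n hn /=.
have [t _ _] := trn_facts (allP a _ hn); by rewrite mem_edn.
Qed.

Lemma dc_transfer E s : uniq s -> all18 s -> E = [set x | x \in map edn s] ->
  degree_criterion E <-> dcn s.
Proof.
move=> u a HE; split.
- move=> H; apply/allP => x hx.
  have ok := allP NC_verts _ hx.
  have := H (decv x); rewrite (degree_count _ u a HE) (degree_countT _ u a HE) cvK //.
  by move=> ->.
- move=> /allP H v; rewrite (degree_count _ u a HE) (degree_countT _ u a HE).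
  apply/eqP/H; apply/allpairsP; exists (val v.1, val v.2).
  by rewrite !mem_iota /= !ltn_ord.
Qed.

Lemma gvE a b : a.-1 < 3 -> b.-1 < 3 -> gv a b = decv (a.-1, b.-1).
Proof.
by move=> ha hb; rewrite /gv /decv; congr pair; apply: val_inj; rewrite /= inordK // modn_small.
Qed.

Lemma B4E : B4 = [set x | x \in map edn B4nat].
Proof.
rewrite /B4 !gvE //; apply/setP => e; rewrite !inE /edn /p1 /p2 /=.
by rewrite !orbA.
Qed.

Lemma imset2 (f : V3 -> V3) a b : f @: [set a; b] = [set f a; f b].
Proof. by rewrite imsetU1 imset_set1. Qed.

Lemma edn_eq n m : n < 18 -> m < 18 -> (edn n == edn m) = (n == m).
Proof.
move=> hn hm; apply/eqP/eqP => [|->] //; exact: edn_inj.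
Qed.

Lemma LIm P S n : P \in perms3 -> S \in perms3 -> n < 18 ->
  [set decv (Pf P S (p1 n)); decv (Pf P S (p2 n))] = edn (img P S n).
Proof.
move=> hP hS hn.
have := allIP (allP (allP NC_img _ hP) _ hS) hn => /andP[_].
rewrite /edn /same2; case/orP=> /andP[/eqP-> /eqP->] //.
by rewrite setUC.
Qed.

Lemma phi_decv (phi : V3 -> V3) P S x :
  (forall v, cv (phi v) = Pf P S (cv v)) -> ok2 x -> phi (decv x) = decv (Pf P S x).
Proof. by move=> h ok; rewrite -[phi _]decvK h cvK. Qed.

Lemma phi_edn (phi : V3 -> V3) P S n : P \in perms3 -> S \in perms3 -> n < 18 ->
  (forall v, cv (phi v) = Pf P S (cv v)) -> phi @: edn n = edn (img P S n).
Proof.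
move=> hP hS hn h; have [v1 v2 _ _] := valid hn.
by rewrite imset2 !(phi_decv h) // LIm.
Qed.

Lemma li_pointwise E s (phi : V3 -> V3) P S :
  uniq s -> all18 s -> size s = 4 -> E = [set x | x \in map edn s] ->
  P \in perms3 -> S \in perms3 -> injective phi ->
  (forall v, cv (phi v) = Pf P S (cv v)) ->
  all (fun n => img P S n \in B4nat) s -> uniq (map (img P S) s) ->
  forall a b, ([set a; b] \in E) = ([set phi a; phi b] \in B4).
Proof.
move=> u a4 sz HE hP hS pinj hphi hall hu x y.
rewrite HE B4E !in_set -imset2; apply/mapP/mapP.
- case=> n hn e; exists (img P S n); first exact: (allP hall).
  by rewrite e (phi_edn hP hS _ hphi) //; exact: (allP a4).
- case=> m hm e.
  have sub : {subset map (img P S) s <= B4nat} by move=> z /mapP[w hw ->]; exact: (allP hall).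
  have szl : size B4nat <= size (map (img P S) s) by rewrite size_map sz.
  have [_ hs] := uniq_min_size hu sub szl.
  have : m \in map (img P S) s by rewrite hs.
  case/mapP => n hn en; exists n => //.
  apply: (imset_inj pinj); rewrite e en (phi_edn hP hS _ hphi) //; exact: (allP a4).
Qed.

Definition tp (pi : {perm 'I_3}) : seq nat := [:: val (pi (o 0)); val (pi (o 1)); val (pi (o 2))].
Lemma tp_perm pi : tp pi \in perms3.
Proof.
have := allIP (allIP (allIP NC_perm (ltn_ord (pi (o 0)))) (ltn_ord (pi (o 1)))) (ltn_ord (pi (o 2))).
by rewrite !(inj_eq val_inj) !(inj_eq perm_inj).
Qed.
Lemma tp_nth pi m : m < 3 -> nth 0 (tp pi) m = val (pi (o m)).
Proof. by case: m => [|[|[|]]]. Qed.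

Lemma nth_lt3 P m : P \in perms3 -> m < 3 -> nth 0 P m < 3.
Proof.
move=> hP hm; have /and3P[/eqP s3 a3 _] := allP NC_perms _ hP.
by apply: (allP a3); apply: mem_nth; rewrite s3.
Qed.

Lemma finj P : P \in perms3 -> injective (fun x : 'I_3 => o (nth 0 P x)).
Proof.
move=> hP x y /(congr1 val) /=; rewrite !modn_small ?nth_lt3 // => e.
have /and3P[/eqP s3 _ uP] := allP NC_perms _ hP.
by apply/val_inj/eqP; rewrite -(@nth_uniq _ 0 P x y) ?s3 ?e ?eqxx.
Qed.

Lemma li_transfer E s : uniq s -> all18 s -> size s = 4 -> E = [set x | x \in map edn s] ->
  locally_isomorphic E B4 <-> lin s.
Proof.
move=> u a4 sz HE; split.
- case=> pi [sigma H].
  pose phi (v : V3) : V3 := (pi v.1, sigma v.2).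
  have hphi : forall v, cv (phi v) = Pf (tp pi) (tp sigma) (cv v).
    by move=> v; rewrite /cv /Pf /= !tp_nth ?ltn_ord // !oK.
  have hP := tp_perm pi; have hS := tp_perm sigma.
  apply/hasP; exists (tp pi) => //; apply/hasP; exists (tp sigma) => //.
  apply/andP; split.
  + apply/allP => n hn; have n18 := allP a4 _ hn.
    have hE : edn n \in E by rewrite HE inE; apply/mapP; exists n.
    have := H (o (p1 n).1) (o (p1 n).2) (o (p2 n).1) (o (p2 n).2).
    change ((edn n \in E) = ([set phi (decv (p1 n)); phi (decv (p2 n))] \in B4) -> 
            img (tp pi) (tp sigma) n \in B4nat).
    rewrite hE -imset2 (phi_edn hP hS n18 hphi) B4E in_set => /esym/mapP[m hm e].
    have /andP[i18 _] := allIP (allP (allP NC_img _ hP) _ hS) n18.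
    by rewrite (edn_inj i18 (allP NC_B4 _ hm) e).
  + rewrite map_inj_in_uniq // => x y hx hy e; apply/eqP.
    have := allIP (allIP (allP (allP NC_imginj _ hP) _ hS) (allP a4 _ hx)) (allP a4 _ hy).
    by rewrite e eqxx.
- case/hasP=> P hP /hasP[S hS /andP[hall hu]].
  exists (perm (finj hP)), (perm (finj hS)) => i j k l.
  pose phi (v : V3) : V3 := (perm (finj hP) v.1, perm (finj hS) v.2).
  have pinj : injective phi.
    by case=> [a b] [c d] [/perm_inj -> /perm_inj ->].
  have hphi : forall v, cv (phi v) = Pf P S (cv v).
    by move=> v; rewrite /cv /Pf /= !permE /= !modn_small // nth_lt3.
  exact: (li_pointwise u a4 sz HE hP hS pinj hphi hall hu (i, j) (k, l)).
Qed.

Lemma ok2_ne (a b : nat) : a < 3 -> b < 3 -> a != b -> o a != o b.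
Proof. by move=> ha hb hab; rewrite -(inj_eq val_inj) /= !modn_small. Qed.

Lemma LC n : n < 18 -> criss_cross [set edn n; edn (trn n)].
Proof.
move=> hn; have [/andP[a1 a2] /andP[b1 b2] d1 d2] := valid hn.
exists (o (p1 n).1), (o (p1 n).2), (o (p2 n).1), (o (p2 n).2); split.
- exact: ok2_ne.
- exact: ok2_ne.
- rewrite -(LT hn (erefl _)) /Tx /= [[set (o (p2 n).1, _); _]]setUC.
  done.
Qed.

Lemma LC2 n (i j k l : 'I_3) : n < 18 -> [set (i, j); (k, l)] = edn n ->
  [set (i, l); (k, j)] = edn (trn n).
Proof. by move=> hn e; rewrite -(LT hn e) /Tx /= setUC. Qed.

Lemma cc_in E s C : all18 s -> E = [set x | x \in map edn s] ->
  criss_cross C -> (forall e, e \in C -> e \in E) ->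
  exists z, [/\ z \in s, trn z \in s & C = [set edn z; edn (trn z)]].
Proof.
move=> a4 HE [i [j [k [l [hik hjl ->]]]]] sub.
have := sub _ (set21 _ _); rewrite HE in_set => /mapP[z hz ez].
have z18 := allP a4 _ hz.
have e2 := LC2 z18 ez.
have := sub _ (set22 _ _); rewrite HE in_set e2 => /mapP[w hw ew].
have [t18 _ _] := trn_facts z18.
have tw := edn_inj t18 (allP a4 _ hw) ew.
by exists z; rewrite -ez -e2 tw.
Qed.

Lemma cc_transfer E s : uniq s -> all18 s -> size s = 4 -> E = [set x | x \in map edn s] ->
  (exists C1 C2 : {set {set V3}},
        [/\ criss_cross C1, criss_cross C2, [disjoint C1 & C2] & E = C1 :|: C2]) <-> ccn s.
Proof.
move=> u a4 sz HE; split.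
- case=> C1 [C2 [c1 c2 dj eE]].
  have s1 : forall e, e \in C1 -> e \in E by move=> e he; rewrite eE inE he.
  have s2 : forall e, e \in C2 -> e \in E by move=> e he; rewrite eE inE he orbT.
  have [z1 [h1 t1 e1]] := cc_in a4 HE c1 s1.
  have [z2 [h2 t2 e2]] := cc_in a4 HE c2 s2.
  have nC : forall x y, edn x \in C1 -> edn y \in C2 -> x != y.
    by move=> x y hx hy; apply/eqP => exy; subst; rewrite (disjointFr dj hx) in hy.
  have [_ n1 _] := trn_facts (allP a4 _ h1).
  have [_ n2 _] := trn_facts (allP a4 _ h2).
  apply/hasP; exists z1 => //; apply/hasP; exists z2 => //; rewrite t1 t2 /=.
  rewrite !inE !negb_or.
  have n1' : z1 != trn z1 by rewrite eq_sym.
  have n2' : z2 != trn z2 by rewrite eq_sym.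
  have m1 : edn z1 \in C1 by rewrite e1 set21.
  have m2 : edn (trn z1) \in C1 by rewrite e1 set22.
  have m3 : edn z2 \in C2 by rewrite e2 set21.
  have m4 : edn (trn z2) \in C2 by rewrite e2 set22.
  by rewrite n1' n2' (nC _ _ m1 m3) (nC _ _ m1 m4) (nC _ _ m2 m3) (nC _ _ m2 m4).
- case/hasP=> x hx /hasP[y hy /andP[/andP[tx ty] hu]].
  have x18 := allP a4 _ hx; have y18 := allP a4 _ hy.
  have tx18 := allP a4 _ tx; have ty18 := allP a4 _ ty.
  exists [set edn x; edn (trn x)], [set edn y; edn (trn y)]; split.
  + exact: LC.
  + exact: LC.
  + rewrite -setI_eq0; apply/eqP/setP => e; rewrite !inE.
    apply/negbTE/negP => /andP[].
    move: hu; rewrite /= !inE !negb_or => /and4P[/and3P[q1 q2 q3] /andP[q4 q5] q6 _].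
    case/orP=> /eqP->; case/orP.
    * by move/eqP/(edn_inj x18 y18)/eqP; rewrite (negbTE q2).
    * by move/eqP/(edn_inj x18 ty18)/eqP; rewrite (negbTE q3).
    * by move/eqP/(edn_inj tx18 y18)/eqP; rewrite (negbTE q4).
    * by move/eqP/(edn_inj tx18 ty18)/eqP; rewrite (negbTE q5).
  + have sub : {subset [:: x; trn x; y; trn y] <= s}.
      by move=> w; rewrite !inE => /or4P[] /eqP->.
    have szl : size s <= size [:: x; trn x; y; trn y] by rewrite sz.
    have [_ hs] := uniq_min_size hu sub szl.
    apply/setP => e; rewrite HE !inE -(eq_mem_map edn hs) /= !inE.
    by rewrite !orbA.
Qed.

Lemma key s : size s = 4 -> uniq s -> all18 s -> sorted leq s -> dcn s = lin s || ccn s.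
Proof.
case: s => [|a [|b [|c [|d [|? ?]]]]] //= _.
rewrite !inE !negb_or => /and4P[/and3P[ab ac ad] /andP[bc bd] cd _].
move=> /and5P[a18 b18 c18 d18 _] /and4P[lab lbc lcd _].
have := allIP (allIP (allIP (allIP bigcheckT a18) b18) c18) d18.
by rewrite !ltn_neqAle ab lab bc lbc cd lcd /= => /eqP.
Qed.

Theorem mainTheorem13 (E : {set {set V3}}) :
  grid_graph E -> #|E| = 4 -> (forall e, e \in E -> diagonal e) ->
  (degree_criterion E <->
     (locally_isomorphic E B4 \/
      exists C1 C2 : {set {set V3}},
        [/\ criss_cross C1, criss_cross C2, [disjoint C1 & C2] & E = C1 :|: C2])).
Proof.
move=> Hg H4 Hd.
pose N := [set n : 'I_18 | edn n \in E].
pose s := sort leq (map val (enum N)).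
have a4 : all18 s.
  by apply/allP => n; rewrite mem_sort => /mapP[x _ ->]; exact: ltn_ord.
have u : uniq s by rewrite sort_uniq map_inj_uniq ?enum_uniq //; exact: val_inj.
have HE : E = [set x | x \in map edn s].
  apply/setP => e; rewrite in_set; apply/idP/mapP.
  - move=> he; have [i [j [k [l [hik hjl ee]]]]] := Hd e he.
    have [n n18 en] := diag_edn hik hjl.
    exists n; last by rewrite -en ee.
    rewrite mem_sort; apply/mapP; exists (Ordinal n18) => //.
    by rewrite mem_enum inE /= -en -ee.
  - by case=> n; rewrite mem_sort => /mapP[x hx ->] ->; move: hx; rewrite mem_enum inE.
have sz : size s = 4.
  by rewrite -(size_map edn) -card_seqset ?edn_uniq // -HE.
have srt : sorted leq s by apply: sort_sorted; exact: leq_total.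
have k := key sz u a4 srt.
split.
- move/(dc_transfer u a4 HE); rewrite k => /orP[/(li_transfer u a4 sz HE) h | /(cc_transfer u a4 sz HE) h].
  + by left.
  + by right.
- move=> h; apply/(dc_transfer u a4 HE); rewrite k.
  case: h => [/(li_transfer u a4 sz HE) -> // | /(cc_transfer u a4 sz HE) ->].
  by rewrite orbT.
Qed.
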